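(* In the setting described in the context, assume $x_h^2\beta>3$ and $n>\frac1{2\alpha x_h^2\beta}-\frac1{x_h^2\beta}$. Then there exists $\dot k>0$ such that for all $0<k\le\dot k$: $$(\hat\sigma^1_{(k+1)n})^2\le2(\hat\lambda\lambda^{n-1})^2\frac1\alpha(\hat\lambda\lambda^{n-1})^{2k},\qquad (\hat\sigma^{r}_{(k+1)n})^2\le6(\hat\lambda\lambda^{n-r})^2\frac1\alpha(\hat\lambda\lambda^{n-1})^{2k}\ \text{ for every } r\in\{2,\dots,n\}.$$
   Context: Fix $\alpha,\beta,x_h,c>0$ and an integer $n\ge2$. Model: $y=\theta x+\xi$, $\xi\sim\mathcal N(0,\beta^{-1})$, prior $\theta\sim\mathcal N(0,\alpha^{-1})$. Database $D_2$ consists of $n-1$ copies of $(x_h,cx_h)$ and one copy of $(x_h/2,cx_h/2)$. Cyclic SGLD with batch size 1 and step size $\eta=\frac2{(\alpha+nx_h^2\beta)^2}$: $\theta_0\sim\mathcal N(0,\alpha^{-1})$, $\theta_{j+1}=\theta_j+\frac\eta2[-\alpha\theta_j+n\beta(y_{i_j}-\theta_jx_{i_j})x_{i_j}]+\sqrt\eta\,\xi_j$ with $\xi_j\sim\mathcal N(0,1)$ i.i.d. independent of $\theta_0$; the database is shuffled once uniformly and its samples are then used cyclically. Let $r\in\{1,\dots,n\}$ be the position within each epoch at which $(x_h/2,cx_h/2)$ is used; conditionally on $r$ the $j$-th iterate is $\hat\theta^r_j\sim\mathcal N(\hat\mu^r_j,(\hat\sigma^r_j)^2)$. Set $\lambda=1-\frac\eta2(\alpha+nx_h^2\beta)$,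 $\hat\lambda=1-\frac\eta2(\alpha+n\frac{x_h^2}4\beta)$. *)

(* Defs.v *)
From Stdlib Require Import Reals Lra Lia Arith.
Open Scope R_scope.

Definition sgld_eta (alpha beta xh : R) (n : nat) : R :=
  2 / (alpha + INR n * xh ^ 2 * beta) ^ 2.

Definition sgld_lam (alpha beta xh : R) (n : nat) : R :=
  1 - sgld_eta alpha beta xh n / 2 * (alpha + INR n * xh ^ 2 * beta).

Definition sgld_lamh (alpha beta xh : R) (n : nat) : R :=
  1 - sgld_eta alpha beta xh n / 2 * (alpha + INR n * (xh ^ 2 / 4) * beta).

(* Input x used at (0-indexed) iteration j when the sample (x_h/2, c x_h/2)
   sits at position r (1-based) in each epoch of the cyclic order. *)
Definition sgld_x (xh : R) (n r j : nat) : R :=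
  if Nat.eqb (S (j mod n)) r then xh / 2 else xh.

(* One SGLD step, theta_{j+1} = a_j theta_j + b_j + sqrt eta xi_j with
   a_j = 1 - eta/2 (alpha + n beta x^2),  b_j = eta/2 n beta y x, y = c x. *)
Definition sgld_a (alpha beta xh : R) (n r j : nat) : R :=
  let x := sgld_x xh n r j in
  1 - sgld_eta alpha beta xh n / 2 * (alpha + INR n * beta * x ^ 2).

Definition sgld_b (alpha beta xh c : R) (n r j : nat) : R :=
  let x := sgld_x xh n r j in
  sgld_eta alpha beta xh n / 2 * INR n * beta * (c * x) * x.

(* Conditionally on r, theta_j ~ N(mu^r_j, (sigma^r_j)^2) where, since
   theta_0 ~ N(0, 1/alpha) and xi_j ~ N(0,1) are independent,
   mu_{j+1} = a_j mu_j + b_j  and  sigma_{j+1}^2 = a_j^2 sigma_j^2 + eta. *)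
Fixpoint sgld_mean (alpha beta xh c : R) (n r j : nat) : R :=
  match j with
  | O => 0
  | S j' => sgld_a alpha beta xh n r j' * sgld_mean alpha beta xh c n r j'
            + sgld_b alpha beta xh c n r j'
  end.

Fixpoint sgld_var (alpha beta xh : R) (n r j : nat) : R :=
  match j with
  | O => / alpha
  | S j' => (sgld_a alpha beta xh n r j') ^ 2 * sgld_var alpha beta xh n r j'
            + sgld_eta alpha beta xh n
  end.

(* Main.v *)
Require Import Defs.
From Stdlib Require Import Reals Lra Psatz Lia Arith.
Open Scope R_scope.

Lemma Rdiv_le_0_compat (a b : R) : 0 <= a -> 0 < b -> 0 <= a / b.
Proof. intros. unfold Rdiv. apply Rmult_le_pos; [assumption|left; apply Rinv_0_lt_compat; assumption]. Qed.

Fixpoint Gp (f : nat -> R) (j : nat) : R :=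
  match j with O => 1 | S j' => (f j') ^ 2 * Gp f j' end.

Lemma pow_le1 (l : R) (m : nat) : 0 <= l <= 1 -> 0 <= l ^ m <= 1.
Proof. intros H; induction m; simpl; nra. Qed.

Lemma bern (y : R) (m : nat) : 0 <= y <= 1 -> 1 - INR m * y <= (1 - y) ^ m.
Proof.
  intros H; induction m; [simpl; lra|].
  rewrite S_INR, <- tech_pow_Rmult. assert (0 <= INR m) by apply pos_INR.
  assert ((1 - y) * (1 - INR m * y) <= (1 - y) * (1 - y) ^ m) by
    (apply Rmult_le_compat_l; lra). nra.
Qed.

Lemma a_eq alpha beta xh n r j :
  sgld_a alpha beta xh n r j =
  if Nat.eqb (S (j mod n)) r then sgld_lamh alpha beta xh n else sgld_lam alpha beta xh n.
Proof.
  unfold sgld_a, sgld_x, sgld_lamh, sgld_lam.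
  cbv zeta. destruct (Nat.eqb (S (j mod n)) r); field.
Qed.

Definition E (h l : R) (r m : nat) : R :=
  if Nat.leb r m then h ^ 2 * (l ^ 2) ^ (m - 1) else (l ^ 2) ^ m.

Lemma epoch (h l : R) (n r k m : nat) (f : nat -> R) :
  (1 <= r <= n)%nat ->
  (forall j, f j = if Nat.eqb (S (j mod n)) r then h else l) ->
  (m <= n)%nat -> Gp f (k * n + m) = Gp f (k * n) * E h l r m.
Proof.
  intros Hr Hf. induction m; intros Hm.
  - unfold E. destruct (Nat.leb_spec r 0); [lia|]. rewrite Nat.add_0_r. simpl; ring.
  - rewrite Nat.add_succ_r. simpl Gp. rewrite IHm by lia. rewrite Hf.
    rewrite Nat.add_comm, Nat.Div0.mod_add, Nat.mod_small by lia.
    unfold E.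
    destruct (Nat.eqb_spec (S m) r); destruct (Nat.leb_spec r m);
      destruct (Nat.leb_spec r (S m)); try lia.
    + replace (S m - 1)%nat with m by lia. ring.
    + replace (S m - 1)%nat with (S (m - 1)) by lia. simpl. ring.
    + simpl. ring.
Qed.

Lemma epochs (h l : R) (n r k : nat) (f : nat -> R) :
  (1 <= r <= n)%nat ->
  (forall j, f j = if Nat.eqb (S (j mod n)) r then h else l) ->
  Gp f (k * n) = (h ^ 2 * (l ^ 2) ^ (n - 1)) ^ k.
Proof.
  intros Hr Hf. induction k.
  - simpl. reflexivity.
  - rewrite Nat.mul_succ_l, (epoch h l n r k n f Hr Hf) by lia. rewrite IHk.
    unfold E. destruct (Nat.leb_spec r n); [|lia]. simpl. ring.
Qed.

Lemma var_bound alpha beta xh n r j :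
  0 < alpha -> 0 <= sgld_eta alpha beta xh n ->
  (forall i, 0 <= sgld_a alpha beta xh n r i <= 1) ->
  sgld_var alpha beta xh n r j <=
  Gp (sgld_a alpha beta xh n r) j / alpha + INR j * sgld_eta alpha beta xh n.
Proof.
  intros Ha He Hab. induction j.
  - simpl. lra.
  - simpl sgld_var. simpl Gp. rewrite S_INR.
    specialize (Hab j).
    set (a := sgld_a alpha beta xh n r j) in *.
    set (e := sgld_eta alpha beta xh n) in *.
    assert (0 <= INR j) by apply pos_INR.
    assert (a ^ 2 * sgld_var alpha beta xh n r j <=
            a ^ 2 * (Gp (sgld_a alpha beta xh n r) j / alpha + INR j * e)).
    { apply Rmult_le_compat_l; [nra|exact IHj]. }
    assert (a ^ 2 * (INR j * e) <= INR j * e).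
    { assert (a ^ 2 <= 1) by nra. assert (0 <= INR j * e) by nra. nra. }
    unfold Rdiv in *. lra.
Qed.

Theorem lemmaA3 (alpha beta xh c : R) (n : nat) :
  0 < alpha -> 0 < beta -> 0 < xh -> 0 < c -> (2 <= n)%nat ->
  xh ^ 2 * beta > 3 ->
  INR n > 1 / (2 * alpha * xh ^ 2 * beta) - 1 / (xh ^ 2 * beta) ->
  let lam := sgld_lam alpha beta xh n in
  let lamh := sgld_lamh alpha beta xh n in
  exists kd : nat, (0 < kd)%nat /\
    forall k : nat, (0 < k <= kd)%nat ->
      sgld_var alpha beta xh n 1 ((k + 1) * n)
        <= 2 * (lamh * lam ^ (n - 1)) ^ 2 * (1 / alpha)
             * (lamh * lam ^ (n - 1)) ^ (2 * k)
      /\ forall r : nat, (2 <= r <= n)%nat ->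
           sgld_var alpha beta xh n r ((k + 1) * n)
             <= 6 * (lamh * lam ^ (n - r)) ^ 2 * (1 / alpha)
                  * (lamh * lam ^ (n - 1)) ^ (2 * k).
Proof.
  intros Ha Hb Hx Hc Hn Hq _ lam lamh.
  set (q := xh ^ 2 * beta) in *.
  set (N := INR n).
  set (S := alpha + N * q).
  assert (HN : 2 <= N). { unfold N. apply (le_INR 2 n) in Hn. simpl in Hn. lra. }
  assert (HS : 6 < S) by (unfold S; nra).
  assert (Heta : sgld_eta alpha beta xh n = 2 / S ^ 2).
  { unfold sgld_eta, S, q, N. rewrite Rmult_assoc. reflexivity. }
  assert (Hlam : lam = 1 - 1 / S).
  { unfold lam, sgld_lam. rewrite Heta.
    replace (alpha + INR n * xh ^ 2 * beta) with S by (unfold S, N, q; ring). field. lra. }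
  assert (Hlamh : lamh = 1 - (alpha + N * q / 4) / S ^ 2).
  { unfold lamh, sgld_lamh. rewrite Heta.
    replace (INR n * (xh ^ 2 / 4) * beta) with (N * q / 4) by (unfold N, q; field). field. lra. }
  assert (Hl0 : 0 <= lam <= 1).
  { rewrite Hlam. split; [|assert (0 < 1/S) by (apply Rdiv_lt_0_compat; lra); lra].
    assert (1 / S <= 1) by (apply Rmult_le_reg_r with S; [lra| field_simplify; lra]). lra. }
  assert (Hlh : lam <= lamh <= 1).
  { rewrite Hlamh, Hlam. assert (0 < alpha + N * q / 4) by nra.
    split.
    - assert ((alpha + N * q / 4) / S ^ 2 <= 1 / S).
      { apply Rmult_le_reg_r with (S ^ 2). nra. field_simplify; try lra. unfold S. nra. }
      lra.
    - assert (0 <= (alpha + N * q / 4) / S ^ 2).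
      { apply Rdiv_le_0_compat; nra. } lra. }
  set (P := lamh * lam ^ (n - 1)).
  assert (HP1 : 1 - N / S <= P).
  { assert (Hb1 := bern (1 / S) (n - 1)).
    rewrite minus_INR in Hb1 by lia. fold N in Hb1. simpl INR in Hb1.
    assert (0 < 1/S) by (apply Rdiv_lt_0_compat; lra).
    assert (1 / S <= 1) by (apply Rmult_le_reg_r with S; [lra| field_simplify; lra]).
    specialize (Hb1 ltac:(lra)). rewrite <- Hlam in Hb1.
    assert (Hp := pow_le1 lam (n - 1) Hl0).
    unfold P.
    assert (lam * lam ^ (n - 1) <= lamh * lam ^ (n - 1)) by nra.
    assert ((1 - 1 / S) * (1 - (N - 1) * (1 / S)) <= lam * lam ^ (n - 1)).
    { rewrite <- Hlam. apply Rmult_le_compat_l; lra. }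
    assert (1 - N / S <= (1 - 1 / S) * (1 - (N - 1) * (1 / S))).
    { unfold Rdiv. assert (0 <= / S * / S) by nra. nra. }
    lra. }
  assert (HNS : 0 <= N / S <= 1 / 3).
  { split. apply Rdiv_le_0_compat; lra.
    apply Rmult_le_reg_r with S; [lra|]. field_simplify; try lra. unfold S. nra. }
  assert (HP0 : 0 <= P).
  { unfold P. apply Rmult_le_pos; [lra| apply pow_le; lra]. }
  assert (Hkey : 4 * N * alpha <= P ^ 4 * S ^ 2).
  { set (x := N / S) in *.
    assert (Hal : alpha = S * (1 - q * x)). { assert (HaS : alpha = S - N * q) by (unfold S; ring).
      unfold x. rewrite HaS at 1. field. lra. }
    assert (HNx : N = S * x). { unfold x. field. lra. }
    assert (0 <= (1 - 4 * x + x ^ 2) ^ 2) by apply pow2_ge_0.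
    assert (0 <= x ^ 3) by (apply pow_le; lra).
    assert (H4 : 4 * x * (1 - 3 * x) <= (1 - x) ^ 4) by nra.
    assert (H5 : (1 - x) ^ 4 <= P ^ 4). { apply pow_incr. lra. }
    rewrite Hal, HNx.
    assert (4 * x * (1 - q * x) <= 4 * x * (1 - 3 * x)) by nra.
    assert (0 < S ^ 2) by nra. nra. }
  assert (Hmain : forall r, (1 <= r <= n)%nat ->
            sgld_var alpha beta xh n r (2 * n) <= 2 * P ^ 4 / alpha).
  { intros r Hr.
    assert (Hab : forall i, 0 <= sgld_a alpha beta xh n r i <= 1).
    { intro i. rewrite a_eq. fold lam lamh. destruct (Nat.eqb _ _); lra. }
    assert (He : 0 <= sgld_eta alpha beta xh n).
    { rewrite Heta. apply Rdiv_le_0_compat; nra. }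
    eapply Rle_trans; [apply var_bound; assumption|].
    rewrite (epochs lamh lam n r 2 _ Hr) by (intro j; rewrite a_eq; reflexivity).
    rewrite <- pow_mult, Nat.mul_comm, pow_mult.
    replace ((lamh ^ 2 * (lam ^ (n - 1)) ^ 2) ^ 2) with (P ^ 4) by (unfold P; ring).
    rewrite mult_INR, Heta. fold N. simpl INR.
    assert (2 * N * (2 / S ^ 2) <= P ^ 4 / alpha).
    { apply Rmult_le_reg_r with (alpha * S ^ 2). { apply Rmult_lt_0_compat; [lra| apply pow_lt; lra]. }
      replace (2 * N * (2 / S ^ 2) * (alpha * S ^ 2)) with (4 * N * alpha)
        by (field; lra).
      replace (P ^ 4 / alpha * (alpha * S ^ 2)) with (P ^ 4 * S ^ 2)
        by (field; lra). lra. }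
    unfold Rdiv in *. lra. }
  exists 1%nat. split; [lia|]. intros k Hk.
  assert (k = 1%nat) by lia. subst k.
  replace ((1 + 1) * n)%nat with (2 * n)%nat by lia.
  fold P. simpl (2 * 1)%nat.
  split.
  - eapply Rle_trans; [apply Hmain; lia|]. unfold Rdiv. right. ring.
  - intros r Hr. eapply Rle_trans; [apply Hmain; lia|].
    set (Q := lamh * lam ^ (n - r)).
    assert (HPQ : P = Q * lam ^ (r - 1)).
    { unfold P, Q. replace (n - 1)%nat with ((n - r) + (r - 1))%nat by lia.
      rewrite pow_add. ring. }
    assert (Hp := pow_le1 lam (r - 1) Hl0).
    assert (0 <= Q) by (unfold Q; apply Rmult_le_pos; [lra| apply pow_le; lra]).
    assert (P <= Q) by nra.
    assert (P ^ 2 <= Q ^ 2) by (apply pow_incr; lra).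
    assert (0 < / alpha) by (apply Rinv_0_lt_compat; lra).
    assert (0 <= P ^ 2) by apply pow2_ge_0.
    assert (HA : P ^ 2 * (P ^ 2 * / alpha) <= Q ^ 2 * (P ^ 2 * / alpha)).
    { apply Rmult_le_compat_r; [apply Rmult_le_pos; lra | lra]. }
    replace (2 * P ^ 4 / alpha) with (2 * (P ^ 2 * (P ^ 2 * / alpha))) by (unfold Rdiv; ring).
    replace (6 * Q ^ 2 * (1 / alpha) * P ^ 2) with (6 * (Q ^ 2 * (P ^ 2 * / alpha))) by (unfold Rdiv; ring).
    assert (0 <= P ^ 2 * (P ^ 2 * / alpha)) by (apply Rmult_le_pos; [lra| apply Rmult_le_pos; lra]).
    lra.
Qed.
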